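(* Fix an outcome $s$, vectors $\mathbf{q}^b,\mathbf{q}^p\in\mathbb{R}^N$ and a demand $\mathbf{d}_s\in\mathbb{R}^N$. Let $\mathbf{r}^p_s$ be an optimal solution of $FR(\mathbf{q}^b,\mathbf{q}^p,\mathbf{d}_s)$ and $(\mathbf{r}^{p\prime}_s,\boldsymbol\omega_s',\mathbf{v}_s',\boldsymbol\phi_s')$ an optimal solution of $FR'(\mathbf{q}^b,\mathbf{q}^p,\mathbf{d}_s)$. Then: (i) $\boldsymbol\omega_s'=0$; (ii) $\mathbf{r}^p_s=\mathbf{r}^{p\prime}_s$; (iii) $\mathbf{H}(\mathbf{q}^b+\mathbf{q}^p+\mathbf{r}^p_s-\mathbf{d}_s)=\mathbf{B}\mathbf{C}^\top\boldsymbol\phi_s'$. Moreover, there exist $\boldsymbol\theta_s'\in\mathbb{R}^N$ and $\mathbf{y}_s'\in\mathbb{R}^L$ with $\mathbf{C}\mathbf{y}_s'=0$ such that $\mathbf{v}_s'=\mathbf{B}\mathbf{C}^\top\boldsymbol\theta_s'+\mathbf{y}_s'$ and $\mathbf{B}\mathbf{C}^\top\boldsymbol\phi_s'=\mathbf{B}\mathbf{C}^\top\boldsymbol\theta_s'$. Finally, $(\mathbf{r}^{p\prime}_s,\boldsymbol\omega_s',\boldsymbol\theta_s',\boldsymbol\phi_s',\boldsymbol\pi_s^{p\prime},\underline{\boldsymbol\mu}_s',\bar{\boldsymbol\mu}_s')$ is an equilibrium point of the closed-loop dynamics described in the context if and only if $(\mathbf{r}^{p\prime}_s,\boldsymbol\omega_s',\mathbf{v}_s',\boldsymbol\phi_s',\boldsymbol\pi_s^{p\prime},\underline{\boldsymbol\mu}_s',\bar{\boldsymbol\mu}_s')$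 is a primal-dual optimal solution of $FR'$, where $\boldsymbol\omega_s'$, $\boldsymbol\pi_s^{p\prime}$ and $(\underline{\boldsymbol\mu}_s',\bar{\boldsymbol\mu}_s')$ are the Lagrange multipliers associated with constraints (b), (c) and (d) of $FR'$, respectively.
   Context: Network: connected directed graph with node set $N$ (also its cardinality) and link set $L$, incidence matrix $\mathbf{C}\in\mathbb{R}^{N\times L}$, $\mathbf{B}=\mathrm{diag}(B_l)$ with $B_l>0$, $\mathbf{L}=\mathbf{C}\mathbf{B}\mathbf{C}^\top$, $\mathbf{H}=\mathbf{B}\mathbf{C}^\top\mathbf{L}^\dagger$, line capacities $\mathbf{f}\in\mathbb{R}^L$, $\mathbf{1}$ the all-ones vector. At each node $n$ a regulation generator has capacity $[\underline{q}_n^p,\bar{q}_n^p]$ and strictly convex continuously differentiable cost $c_n^p$ of its total output; $c_n^{p\prime}$ is its derivative and $c_n^{p\prime-1}$ the inverse of the derivative. $\mathbf{D}=\mathrm{diag}(D_n)$ (damping, $D_n>0$), $\mathbf{M}=\mathrm{diag}(M_n)$ (inertia, $M_n>0$). $FR(\mathbf{q}^b,\mathbf{q}^p,\mathbf{d}_s)$: minimize $\sum_n c_n^p(q^p_n+r^p_{s,n})$ over $\mathbf{r}^p_s\in\mathbb{R}^N$ subject to $\underline{\mathbf{q}}^p\le\mathbf{q}^p+\mathbf{r}^p_s\le\bar{\mathbf{q}}^p$, $\mathbf{1}^\top(\mathbf{q}^b+\mathbf{q}^p+\mathbf{r}^p_s-\mathbf{d}_s)=0$, $-\mathbf{f}\le\mathbf{H}(\mathbf{q}^b+\mathbf{q}^p+\mathbf{r}^p_s-\mathbf{d}_s)\le\mathbf{f}$.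 $FR'(\mathbf{q}^b,\mathbf{q}^p,\mathbf{d}_s)$: minimize $\sum_n\big(c_n^p(q_n^p+r^p_{s,n})+D_n\omega_{s,n}^2/2\big)$ over $(\mathbf{r}^p_s,\boldsymbol\omega_s,\mathbf{v}_s,\boldsymbol\phi_s)\in\mathbb{R}^N\times\mathbb{R}^N\times\mathbb{R}^L\times\mathbb{R}^N$ subject to (b) $\mathbf{q}^b+\mathbf{q}^p+\mathbf{r}^p_s-\mathbf{d}_s-\mathbf{D}\boldsymbol\omega_s=\mathbf{C}\mathbf{v}_s$; (c) $\mathbf{q}^b+\mathbf{q}^p+\mathbf{r}^p_s-\mathbf{d}_s=\mathbf{L}\boldsymbol\phi_s$; (d) $-\mathbf{f}\le\mathbf{B}\mathbf{C}^\top\boldsymbol\phi_s\le\mathbf{f}$; (e) $\underline{\mathbf{q}}^p\le\mathbf{q}^p+\mathbf{r}^p_s\le\bar{\mathbf{q}}^p$. Closed-loop dynamics (time $t$, states $\boldsymbol\theta_s,\boldsymbol\omega_s,\boldsymbol\pi^p_s,\bar{\boldsymbol\mu}_s,\underline{\boldsymbol\mu}_s,\boldsymbol\phi_s$): $\dot{\boldsymbol\theta}_s=\boldsymbol\omega_s$; $\mathbf{M}\dot{\boldsymbol\omega}_s=\mathbf{q}^b+\mathbf{q}^p+\mathbf{r}^p_s(t)-\mathbf{d}_s-\mathbf{D}\boldsymbol\omega_s-\mathbf{L}\boldsymbol\theta_s$; $r^p_{s,n}(t)=\big[c_n^{p\prime-1}(-\omega_{s,n}(t)-\pi^p_{s,n}(t))-q^p_n\big]_{\underline{q}_n^p-q_n^p}^{\bar{q}_n^p-q_n^p}$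 where $[x]_a^b$ is the projection (clamp) of $x$ onto $[a,b]$; $\dot{\boldsymbol\pi}^p_s=\boldsymbol\zeta^\pi(\mathbf{q}^b+\mathbf{q}^p+\mathbf{r}^p_s(t)-\mathbf{d}_s-\mathbf{L}\boldsymbol\phi_s)$; $\dot{\bar{\boldsymbol\mu}}_s=\boldsymbol\zeta^{\bar\mu}[\mathbf{B}\mathbf{C}^\top\boldsymbol\phi_s-\mathbf{f}]^+_{\bar{\boldsymbol\mu}_s}$; $\dot{\underline{\boldsymbol\mu}}_s=\boldsymbol\zeta^{\underline\mu}[-\mathbf{f}-\mathbf{B}\mathbf{C}^\top\boldsymbol\phi_s]^+_{\underline{\boldsymbol\mu}_s}$; $\dot{\boldsymbol\phi}_s=\boldsymbol\chi^\phi(\mathbf{L}\boldsymbol\pi^p_s-\mathbf{C}\mathbf{B}(\bar{\boldsymbol\mu}_s-\underline{\boldsymbol\mu}_s))$. Here $\boldsymbol\zeta^\pi,\boldsymbol\chi^\phi\in\mathbb{R}^{N\times N}$ and $\boldsymbol\zeta^{\bar\mu},\boldsymbol\zeta^{\underline\mu}\in\mathbb{R}^{L\times L}$ are diagonal gain matrices, and $[\mathbf{y}]^+_{\mathbf{x}}$ is taken elementwise with $[y]^+_x=0$ if $x=0$ and $y<0$, and $[y]^+_x=y$ otherwise. *)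

(* Defs.v *)
From HB Require Import structures.
From mathcomp Require Import all_boot all_order all_algebra.
From mathcomp Require Import all_classical all_reals all_analysis.
Set Implicit Arguments.
Unset Strict Implicit.
Unset Printing Implicit Defensive.
Import Order.TTheory GRing.Theory Num.Theory.
Import numFieldNormedType.Exports.
Local Open Scope ring_scope.

Section Defs.
Variable R : realType.

Definition leV n (u v : 'cV[R]_n) : Prop := forall i, u i 0 <= v i 0.
Definition dotv n (u v : 'cV[R]_n) : R := \sum_i u i 0 * v i 0.

Definition incidence (N L : nat) (src dst : 'I_L -> 'I_N) : 'M[R]_(N, L) :=
  \matrix_(i, l) (((i == src l)%:R : R) - (i == dst l)%:R).

Definition graph_connected (N L : nat) (src dst : 'I_L -> 'I_N) : Prop :=
  forall i j : 'I_N, connect (fun a b : 'I_N =>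
    [exists l, ((src l == a) && (dst l == b)) || ((src l == b) && (dst l == a))]) i j.

Definition is_MP_pinv n (A X : 'M[R]_n) : Prop :=
  [/\ A *m X *m A = A, X *m A *m X = X, (A *m X)^T = A *m X & (X *m A)^T = X *m A].

Definition strictly_convex (g : R -> R) : Prop :=
  forall x y t, x != y -> 0 < t < 1 -> g (t * x + (1 - t) * y) < t * g x + (1 - t) * g y.

Definition cont_diff (g : R -> R) : Prop :=
  (forall x, derivable g x 1) /\ continuous (derive1 g : R -> R).

Definition clamp (a b x : R) : R := Num.max a (Num.min x b).
Definition projp (x y : R) : R := if (x == 0) && (y < 0) then 0 else y.

Variables (N L : nat).
Variables (C : 'M[R]_(N, L)) (B : 'M[R]_L) (Ldag : 'M[R]_N) (D M : 'M[R]_N).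
Variables (f : 'cV[R]_L) (qlo qhi : 'cV[R]_N) (c cinv : 'I_N -> R -> R).
Variables (qb qp d : 'cV[R]_N).

Definition lapl : 'M[R]_N := C *m B *m C^T.
Definition Hmx : 'M[R]_(L, N) := B *m C^T *m Ldag.

Definition inj (r : 'cV[R]_N) : 'cV[R]_N := qb + qp + r - d.

Definition FR_feasible (r : 'cV[R]_N) : Prop :=
  [/\ leV qlo (qp + r), leV (qp + r) qhi,
      \sum_i (inj r) i 0 = 0,
      leV (- f) (Hmx *m inj r) & leV (Hmx *m inj r) f].

Definition FR_cost (r : 'cV[R]_N) : R := \sum_n c n (qp n 0 + r n 0).

Definition FR_optimal (r : 'cV[R]_N) : Prop :=
  FR_feasible r /\ forall r2, FR_feasible r2 -> FR_cost r <= FR_cost r2.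

(* the "box" constraint (e), which carries no multiplier *)
Definition box (r : 'cV[R]_N) : Prop := leV qlo (qp + r) /\ leV (qp + r) qhi.

Definition FRp_feasible (r w : 'cV[R]_N) (v : 'cV[R]_L) (phi : 'cV[R]_N) : Prop :=
  [/\ inj r - D *m w = C *m v,                       (* (b) *)
      inj r = lapl *m phi,                           (* (c) *)
      (leV (- f) (B *m C^T *m phi) /\ leV (B *m C^T *m phi) f)   (* (d) *)
    & box r].                                        (* (e) *)

Definition FRp_cost (r w : 'cV[R]_N) : R :=
  \sum_n (c n (qp n 0 + r n 0) + D n n * (w n 0) ^+ 2 / 2).

Definition FRp_optimal r w v phi : Prop :=
  FRp_feasible r w v phi /\
  forall r2 w2 v2 phi2, FRp_feasible r2 w2 v2 phi2 ->
    FRp_cost r w <= FRp_cost r2 w2.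

(* Lagrangian of FR': multipliers lam (b), pi (c), muhi / mulo (upper/lower (d));
   (e) is kept as the domain of the primal variables. *)
Definition FRp_lagrangian r w v phi (lam pi : 'cV[R]_N) (mulo muhi : 'cV[R]_L) : R :=
  FRp_cost r w
  + dotv lam (inj r - D *m w - C *m v)
  + dotv pi (inj r - lapl *m phi)
  + dotv muhi (B *m C^T *m phi - f)
  + dotv mulo (- f - B *m C^T *m phi).

Definition FRp_dual lam pi mulo muhi : \bar R :=
  ereal_inf [set z : \bar R | exists r w v phi,
     box r /\ z = (FRp_lagrangian r w v phi lam pi mulo muhi)%:E].

Definition FRp_dual_feasible (lam pi : 'cV[R]_N) (mulo muhi : 'cV[R]_L) : Prop :=
  leV 0 mulo /\ leV 0 muhi.

Definition FRp_dual_optimal lam pi mulo muhi : Prop :=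
  FRp_dual_feasible lam pi mulo muhi /\
  forall lam2 pi2 mulo2 muhi2, FRp_dual_feasible lam2 pi2 mulo2 muhi2 ->
    (FRp_dual lam2 pi2 mulo2 muhi2 <= FRp_dual lam pi mulo muhi)%E.

(* primal-dual optimal solution (r, w, v, phi, pi, mulo, muhi) of FR', where w is
   simultaneously the primal variable and the multiplier of (b) *)
Definition FRp_primal_dual_optimal r w v phi pi mulo muhi : Prop :=
  FRp_optimal r w v phi /\ FRp_dual_optimal w pi mulo muhi.

Variables (Zpi Xphi : 'M[R]_N) (Zmuhi Zmulo : 'M[R]_L).

Definition r_ctrl (w pi : 'cV[R]_N) : 'cV[R]_N :=
  \col_n clamp (qlo n 0 - qp n 0) (qhi n 0 - qp n 0)
               (cinv n (- w n 0 - pi n 0) - qp n 0).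

(* equilibrium point (r, w, theta, phi, pi, mulo, muhi): the algebraic output r
   is given by the controller law, the state lies in the state space of the
   projected dynamics (multipliers nonnegative), and every time derivative is 0 *)
Definition cl_equilibrium (r w theta phi pi : 'cV[R]_N) (mulo muhi : 'cV[R]_L) : Prop :=
  r = r_ctrl w pi /\ (leV 0 mulo /\ leV 0 muhi) /\
  w = 0 /\                                                      (* theta-dot *)
  invmx M *m (inj r - D *m w - lapl *m theta) = 0 /\            (* omega-dot *)
  Zpi *m (inj r - lapl *m phi) = 0 /\
  Zmuhi *m (\col_l projp (muhi l 0) ((B *m C^T *m phi - f) l 0)) = 0 /\
  Zmulo *m (\col_l projp (mulo l 0) ((- f - B *m C^T *m phi) l 0)) = 0 /\
  Xphi *m (lapl *m pi - C *m B *m (muhi - mulo)) = 0.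

End Defs.

(* Main.v *)
Require Import Defs.
From HB Require Import structures.
From mathcomp Require Import all_boot all_order all_algebra.
From mathcomp Require Import all_classical all_reals all_analysis.
From mathcomp Require Import ring lra.
Import Order.TTheory GRing.Theory Num.Theory.
Import numFieldNormedType.Exports.
Local Open Scope ring_scope.

Section OneD.
Variables (R : realType) (g ginv : R -> R).
Hypotheses (scvx : strictly_convex g) (dg : forall x, derivable g x 1)
  (cdg : continuous (derive1 g)) (gK : cancel (derive1 g) ginv)
  (Kg : cancel ginv (derive1 g)).

Lemma isd (x : R) : is_derive x (1:R) g (derive1 g x).
Proof. rewrite derive1E; exact: derivableP. Qed.

Lemma gcont : continuous g.
Proof. move=> x; apply: differentiable_continuous; rewrite -derivable1_diffP; exact: dg. Qed.

Lemma mvt a b : a < b -> exists2 c, c \in `]a, b[ & g b - g a = derive1 g c * (b - a).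
Proof.
move=> ab; apply: MVT => //; first by move=> x _; exact: isd.
exact: continuous_subspaceT gcont.
Qed.

Lemma dmono : {mono derive1 g : x y / x <= y}.
Proof.
have := @itv_continuous_inj_le R (derive1 g) `]-oo, +oo[.
move=> H x y; apply: H => //.
- have [c1 c1i e1] := @mvt 0 1 ltr01.
  have [c2 c2i e2] := @mvt 1 2 (ltr_nat R 1 2).
  exists c1, c2; split => //.
  + move: c1i c2i; rewrite !in_itv /= => /andP[_ h1] /andP[h2 _]; exact: lt_trans h1 h2.
  + have h0 : (0:R) != 2 by rewrite eq_sym pnatr_eq0.
    have ht : 0 < (2:R)^-1 < 1.
      by apply/andP; split; [rewrite invr_gt0 ltr0n | rewrite invf_lt1 ?ltr0n ?ltr1n].
    have h := scvx 0 2 (2^-1) h0 ht.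
    have e3 : (2:R)^-1 * 0 + (1 - 2^-1) * 2 = 1 by field.
    rewrite e3 in h.
    have e4 : (1:R) - 2^-1 = 2^-1 by field.
    rewrite e4 in h.
    have e5 : (1:R) - 0 = 1 by lra.
    have e6 : (2:R) - 1 = 1 by lra.
    rewrite e5 e6 !mulr1 in e1 e2.
    apply: ltW; lra.
- exact: continuous_subspaceT cdg.
- by move=> u v _ _ /(congr1 ginv); rewrite !gK.
Qed.

Lemma grad x y : g x + derive1 g x * (y - x) <= g y.
Proof.
case: (ltgtP x y) => [xy|yx|<-]; last by rewrite subrr mulr0 addr0.
- have [c ci e] := @mvt _ _ xy; move: ci; rewrite in_itv /= => /andP[xc _].
  have : derive1 g x <= derive1 g c by rewrite dmono ltW.
  have : 0 <= y - x by rewrite subr_ge0 ltW.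
  move=> h1 h2; have := ler_wpM2r h1 h2; lra.
- have [c ci e] := @mvt _ _ yx; move: ci; rewrite in_itv /= => /andP[_ cx].
  have : derive1 g c <= derive1 g x by rewrite dmono ltW.
  have : 0 <= x - y by rewrite subr_ge0 ltW.
  move=> h1 h2; have := ler_wpM2r h1 h2; lra.
Qed.

Lemma ginv_mono : {mono ginv : x y / x <= y}.
Proof. by move=> x y; rewrite -dmono !Kg. Qed.

Lemma ginv_cont : continuous ginv.
Proof.
move=> y; have H := @near_can_continuous R (derive1 g) ginv (ginv y).
rewrite Kg in H; apply: (nbhs_singleton (H _ _)).
- by near=> z; rewrite gK.
- by near=> z; apply: cdg.
Unshelve. all: by end_near.
Qed.


Lemma clamp_cases (a b x : R) : a <= b ->
  [\/ x <= a /\ clamp a b x = a, (a <= x <= b) /\ clamp a b x = x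
    | b <= x /\ clamp a b x = b].
Proof.
move=> ab; rewrite /clamp.
have [xb|xb] := boolP (x <= b).
- rewrite (min_l xb); have [ax|ax] := boolP (a <= x).
  + by apply: Or32; split; [apply/andP|rewrite (max_r ax)].
  + rewrite -ltNge in ax.
    by apply: Or31; split; [apply: ltW|rewrite (max_l (ltW ax))].
- rewrite -ltNge in xb.
  rewrite (min_r (ltW xb)) (max_r ab); apply: Or33; split => //; exact: ltW.
Qed.

Lemma clamp_in (a b x : R) : a <= b -> a <= clamp a b x <= b.
Proof.
move=> ab; case: (@clamp_cases a b x ab) => [[h ->]|[h ->]|[h ->]] //; apply/andP; split => //.
Qed.

Lemma clamp_lip (a b x y : R) : a <= b -> `|clamp a b x - clamp a b y| <= `|x - y|.
Proof.
move=> ab.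
wlog xy : x y / x <= y.
  move=> H; have [h|h] := boolP (x <= y); first exact: H h.
  rewrite -ltNge in h.
  by rewrite distrC [`|x - y|]distrC; apply: H; apply: ltW.
have h1 : 0 <= clamp a b y - clamp a b x <= y - x.
  case: (@clamp_cases a b x ab) => [[h ->]|[/andP[h h'] ->]|[h ->]];
  case: (@clamp_cases a b y ab) => [[k ->]|[/andP[k k'] ->]|[k ->]];
  apply/andP; split; lra.
move/andP: h1 => [h1 h2].
rewrite distrC (ger0_norm h1) distrC (ger0_norm (_ : 0 <= y - x)) ?subr_ge0 //.
Qed.

Definition xh (a b q p : R) := clamp a b (ginv (- p) - q).

Lemma argmin (a b q p x : R) : a <= b -> a <= x <= b ->
  g (q + xh a b q p) + p * xh a b q p <= g (q + x) + p * x.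
Proof.
move=> ab /andP[ax xb]; rewrite /xh.
set z := ginv (- p) - q.
have hz : derive1 g (q + z) = - p by rewrite /z addrC subrK Kg.
set y := clamp a b z.
have key : 0 <= (derive1 g (q + y) + p) * (x - y).
  rewrite /y; case: (@clamp_cases a b z ab) => [[h ->]|[_ ->]|[h ->]].
  - apply: mulr_ge0; last by rewrite subr_ge0.
    have : derive1 g (q + z) <= derive1 g (q + a) by rewrite dmono lerD2l.
    rewrite hz; lra.
  - by rewrite hz addNr mul0r.
  - apply: mulr_le0; last by rewrite subr_le0.
    have : derive1 g (q + b) <= derive1 g (q + z) by rewrite dmono lerD2l.
    rewrite hz; lra.
have := grad (q + y) (q + x).
have -> : q + x - (q + y) = x - y by ring.
move: key; rewrite mulrDl; set u := derive1 g (q + y) * (x - y).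
have -> : p * (x - y) = p * x - p * y by ring.
lra.
Qed.

Lemma argmin_uniq (a b q p x : R) : a <= b -> a <= x <= b ->
  g (q + x) + p * x <= g (q + xh a b q p) + p * xh a b q p -> x = xh a b q p.
Proof.
move=> ab xab hle; have [//|hne] := eqVneq x (xh a b q p).
set y := xh a b q p in hle hne *.
have yab : a <= y <= b by exact: clamp_in.
have hne' : q + x != q + y by apply: contra hne => /eqP h; apply/eqP; lra.
have ht : 0 < (2:R)^-1 < 1.
  by apply/andP; split; [rewrite invr_gt0 ltr0n | rewrite invf_lt1 ?ltr0n ?ltr1n].
have h := scvx (q + x) (q + y) (2^-1) hne' ht.
have e4 : (1:R) - 2^-1 = 2^-1 by field.
rewrite e4 in h.
set m := 2^-1 * x + 2^-1 * y.
have em : 2^-1 * (q + x) + 2^-1 * (q + y) = q + m by rewrite /m; field.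
rewrite em in h.
have mab : a <= m <= b.
  move/andP: xab => [h1 h2]; move/andP: yab => [h3 h4]; apply/andP; rewrite /m; split; lra.
have := @argmin a b q p m ab mab; rewrite -/y.
have -> : p * m = 2^-1 * (p * x) + 2^-1 * (p * y) by rewrite /m; ring.
lra.
Qed.

Lemma xh_near (a b q p0 d e : R) : a <= b -> 0 < e ->
  exists2 h, 0 < h & forall t, 0 < t < h ->
    `|xh a b q (p0 + t * d) - xh a b q p0| < e.
Proof.
move=> ab e0.
have := ginv_cont (- p0); move/cvgrPdist_lt/(_ e e0)/nbhs_ballP => [del del0 Hd].
exists (del / (`|d| + 1)).
  by apply: divr_gt0 => //; apply: ltr_wpDl.
move=> t /andP[t0 th].
rewrite /xh; apply: le_lt_trans (clamp_lip _ _ _ _ ab) _.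
have -> : ginv (- (p0 + t * d)) - q - (ginv (- p0) - q) = - (ginv (- p0) - ginv (- (p0 + t * d))) by ring.
rewrite normrN; apply: Hd.
rewrite -ball_normE /ball_ /=.
have -> : - p0 - - (p0 + t * d) = t * d by ring.
rewrite normrM (gtr0_norm t0).
have d1 : 0 < `|d| + 1 by apply: ltr_wpDl.
rewrite ltr_pdivlMr // in th.
apply: le_lt_trans th; rewrite mulrDr mulr1 lerDl; exact: ltW.
Qed.

End OneD.

Section LinAlg.
Variables (R : realType) (N L : nat) (src dst : 'I_L -> 'I_N) (Bv : 'rV[R]_L).
Hypothesis Bpos : forall l, 0 < Bv 0 l.
Local Notation C := (incidence R src dst).
Local Notation B := (diag_mx Bv).
Local Notation Lp := (lapl C B).

Lemma dotvC n (u v : 'cV[R]_n) : dotv u v = dotv v u.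
Proof. by apply: eq_bigr => i _; rewrite mulrC. Qed.
Lemma dotvDl n (u u' v : 'cV[R]_n) : dotv (u + u') v = dotv u v + dotv u' v.
Proof. by rewrite /dotv -big_split; apply: eq_bigr => i _; rewrite mxE mulrDl. Qed.
Lemma dotvNl n (u v : 'cV[R]_n) : dotv (- u) v = - dotv u v.
Proof. by rewrite /dotv -sumrN; apply: eq_bigr => i _; rewrite mxE mulNr. Qed.
Lemma dotvBl n (u u' v : 'cV[R]_n) : dotv (u - u') v = dotv u v - dotv u' v.
Proof. by rewrite dotvDl dotvNl. Qed.
Lemma dotvZl n t (u v : 'cV[R]_n) : dotv (t *: u) v = t * dotv u v.
Proof. by rewrite /dotv mulr_sumr; apply: eq_bigr => i _; rewrite mxE mulrA. Qed.
Lemma dotvDr n (u v v' : 'cV[R]_n) : dotv u (v + v') = dotv u v + dotv u v'.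
Proof. by rewrite dotvC dotvDl !(@dotvC _ u). Qed.
Lemma dotvNr n (u v : 'cV[R]_n) : dotv u (- v) = - dotv u v.
Proof. by rewrite dotvC dotvNl dotvC. Qed.
Lemma dotvBr n (u v v' : 'cV[R]_n) : dotv u (v - v') = dotv u v - dotv u v'.
Proof. by rewrite dotvDr dotvNr. Qed.
Lemma dotvZr n t (u v : 'cV[R]_n) : dotv u (t *: v) = t * dotv u v.
Proof. by rewrite dotvC dotvZl dotvC. Qed.
Lemma dotv0r n (u : 'cV[R]_n) : dotv u 0 = 0.
Proof. by rewrite /dotv big1 // => i _; rewrite mxE mulr0. Qed.
Lemma dotv0l n (u : 'cV[R]_n) : dotv 0 u = 0.
Proof. by rewrite dotvC dotv0r. Qed.

Lemma dotv_mul m n (A : 'M[R]_(m, n)) u v : dotv u (A *m v) = dotv (A^T *m u) v.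
Proof.
rewrite /dotv; under eq_bigr do rewrite mxE mulr_sumr.
rewrite exchange_big /=; apply: eq_bigr => j _; rewrite !mxE mulr_suml.
by apply: eq_bigr => i _; rewrite !mxE mulrCA mulrA.
Qed.

Lemma sum_indic (s : 'I_N) : \sum_(i < N) ((i == s)%:R : R) = 1.
Proof. by rewrite (bigD1 s) //= eqxx big1 ?addr0 // => i /negbTE ->. Qed.

Lemma sumC (y : 'cV[R]_L) : \sum_i (C *m y) i 0 = 0.
Proof.
under eq_bigr do rewrite mxE.
rewrite exchange_big /= big1 // => l _.
rewrite -mulr_suml; under eq_bigr do rewrite mxE.
by rewrite sumrB !sum_indic subrr mul0r.
Qed.

Lemma sum_indicM (s : 'I_N) (x : 'I_N -> R) : \sum_(i < N) ((i == s)%:R * x i) = x s.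
Proof. by rewrite (bigD1 s) //= eqxx mul1r big1 ?addr0 // => i /negbTE ->; rewrite mul0r. Qed.

Lemma CtE (x : 'cV[R]_N) l : (C^T *m x) l 0 = x (src l) 0 - x (dst l) 0.
Proof.
rewrite mxE; under eq_bigr do rewrite !mxE mulrBl.
by rewrite sumrB !sum_indicM.
Qed.

Lemma lapl_tr : Lp^T = Lp.
Proof. by rewrite /lapl !trmx_mul trmxK tr_diag_mx mulmxA. Qed.

Lemma laplE (x : 'cV[R]_N) : Lp *m x = C *m (B *m (C^T *m x)).
Proof. by rewrite /lapl !mulmxA. Qed.

Lemma quad (x : 'cV[R]_N) :
  dotv x (Lp *m x) = \sum_l Bv 0 l * ((C^T *m x) l 0) ^+ 2.
Proof.
rewrite laplE dotv_mul /dotv; apply: eq_bigr => l _.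
set y := C^T *m x.
have -> : (B *m y) l 0 = Bv 0 l * y l 0 by rewrite mul_diag_mx mxE.
by rewrite mulrCA expr2.
Qed.

Lemma ker_lapl (x : 'cV[R]_N) : Lp *m x = 0 -> C^T *m x = 0.
Proof.
move=> h; have : \sum_l Bv 0 l * ((C^T *m x) l 0) ^+ 2 = 0 by rewrite -quad h dotv0r.
move/psumr_eq0P => H; apply/matrixP => l j; rewrite (ord1 j) [RHS]mxE.
have := H (fun i _ => mulr_ge0 (ltW (Bpos i)) (sqr_ge0 _)) l isT => /eqP.
by rewrite mulf_eq0 sqrf_eq0 (gt_eqF (Bpos l)) /= => /eqP.
Qed.

Lemma ker_lapl2 (x x' : 'cV[R]_N) : Lp *m x = Lp *m x' -> B *m C^T *m x = B *m C^T *m x'.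
Proof.
move=> h; have : Lp *m (x - x') = 0 by rewrite mulmxBr h subrr.
move/ker_lapl; rewrite mulmxBr => /eqP; rewrite subr_eq0 => /eqP e.
by rewrite -!mulmxA e.
Qed.

Hypothesis conn : graph_connected src dst.

Lemma ker_const (x : 'cV[R]_N) : C^T *m x = 0 -> forall i j, x i 0 = x j 0.
Proof.
move=> h i j; have := conn i j; move/connectP => [p pth ->].
elim: p i pth => [|a p IH] i //= /andP[e pth].
rewrite -(IH a pth).
move/existsP: e => [l /orP[/andP[/eqP s /eqP d]|/andP[/eqP s /eqP d]]];
  have := congr1 (fun M : 'cV[R]_L => M l 0) h; rewrite CtE mxE -s -d => /eqP;
  rewrite subr_eq0 => /eqP //.
Qed.

Lemma LdagK (Ld : 'M[R]_N) : is_MP_pinv Lp Ld ->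
  forall y : 'cV[R]_N, \sum_i y i 0 = 0 -> Lp *m (Ld *m y) = y.
Proof.
move=> [P1 _ P3 _] y sy.
set u := y - Lp *m (Ld *m y).
have hu : Lp *m u = 0.
  apply: trmx_inj; rewrite trmx0 trmx_mul lapl_tr /u linearB /= trmx_mul.
  by rewrite trmx_mul -mulmxA -trmx_mul P3 mulmxBl -(mulmxA y^T) P1 subrr.
have hc := @ker_const u (@ker_lapl u hu).
have su : \sum_i u i 0 = 0.
  rewrite /u; set M := Lp *m (Ld *m y).
  have -> : \sum_i (y - M) i 0 = \sum_i y i 0 - \sum_i M i 0.
    by rewrite -sumrB; apply: eq_bigr => i _; rewrite !mxE.
  by rewrite sy /M laplE sumC subrr.
have u0 : forall i, u i 0 = 0.
  move=> i; move: su; rewrite (eq_bigr (fun=> u i 0)); last by move=> k _; rewrite (hc k i).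
  rewrite sumr_const card_ord => /eqP; rewrite mulrn_eq0 => /orP[/eqP N0|/eqP //].
  by have := ltn_ord i; rewrite {2}N0.
have : u = 0 by apply/matrixP => i j; rewrite (ord1 j) u0 mxE.
by rewrite /u => /eqP; rewrite subr_eq0 => /eqP <-.
Qed.

Lemma LdagL (Ld : 'M[R]_N) : is_MP_pinv Lp Ld ->
  forall x : 'cV[R]_N, Lp *m (Ld *m (Lp *m x)) = Lp *m x.
Proof. by move=> [P1 _ _ _] x; rewrite (mulmxA Ld) (mulmxA Lp) (mulmxA Lp Ld) P1. Qed.

End LinAlg.

Section Main.
Variables (R : realType) (N L : nat)
  (src dst : 'I_L -> 'I_N) (Bv : 'rV[R]_L) (Dv Mv : 'rV[R]_N)
  (Ldag : 'M[R]_N) (f : 'cV[R]_L) (qlo qhi : 'cV[R]_N)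
  (c cinv : 'I_N -> R -> R)
  (qb qp d : 'cV[R]_N).
Local Notation C := (incidence R src dst).
Local Notation B := (diag_mx Bv).
Local Notation D := (diag_mx Dv).
Local Notation Lp := (lapl C B).
Hypotheses (conn : graph_connected src dst)
  (Bpos : forall l, 0 < Bv 0 l) (Dpos : forall n, 0 < Dv 0 n)
  (pinv : is_MP_pinv Lp Ldag)
  (scvx : forall n, strictly_convex (c n))
  (cdiff : forall n, cont_diff (c n))
  (cK : forall n, cancel (derive1 (c n)) (cinv n) /\ cancel (cinv n) (derive1 (c n))).

Local Notation inj := (Defs.inj qb qp d).
Local Notation box := (Defs.box qlo qhi qp).
Local Notation FRp_cost := (FRp_cost D c qp).
Local Notation Lag := (FRp_lagrangian C B D f c qb qp d).
Local Notation dual := (FRp_dual C B D f qlo qhi c qb qp d).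

Definition xs (pi : 'cV[R]_N) := r_ctrl qlo qhi cinv qp 0 pi.

Lemma xsE pi n : xs pi n 0 = xh R (cinv n) (qlo n 0 - qp n 0) (qhi n 0 - qp n 0) (qp n 0) (pi n 0).
Proof. by rewrite /xs /r_ctrl /xh mxE mxE oppr0 sub0r. Qed.

Lemma boxP r : box r <-> forall n, qlo n 0 - qp n 0 <= r n 0 <= qhi n 0 - qp n 0.
Proof.
split.
- move=> [h1 h2] n; move: (h1 n) (h2 n); rewrite !mxE => a b; apply/andP; split; lra.
- move=> h; split => n; move: (h n); rewrite !mxE => /andP[a b]; lra.
Qed.

Hypothesis lohi : forall n, qlo n 0 <= qhi n 0.
Lemma lohi' n : qlo n 0 - qp n 0 <= qhi n 0 - qp n 0.
Proof. by rewrite lerD2r. Qed.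

Lemma box_xs pi : box (xs pi).
Proof. apply/boxP => n; rewrite xsE; exact: clamp_in (lohi' n). Qed.

Definition Phi (pi r : 'cV[R]_N) := \sum_n (c n (qp n 0 + r n 0) + pi n 0 * r n 0).

Lemma Phi_min pi r : box r -> Phi pi (xs pi) <= Phi pi r.
Proof.
move/boxP => hb; apply: ler_sum => n _; rewrite xsE.
have [h1 h2] := cK n; have [h3 h4] := cdiff n.
exact: argmin (scvx n) h3 h4 h1 h2 _ _ _ _ _ (lohi' n) (hb n).
Qed.

Lemma Phi_uniq pi r : box r -> Phi pi r <= Phi pi (xs pi) -> r = xs pi.
Proof.
move=> /boxP hb hle.
have hd : forall n, 0 <= (c n (qp n 0 + r n 0) + pi n 0 * r n 0) -
     (c n (qp n 0 + xs pi n 0) + pi n 0 * xs pi n 0).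
  move=> n; rewrite subr_ge0 xsE.
  have [h1 h2] := cK n; have [h3 h4] := cdiff n.
  exact: argmin (scvx n) h3 h4 h1 h2 _ _ _ _ _ (lohi' n) (hb n).
have hs : \sum_n ((c n (qp n 0 + r n 0) + pi n 0 * r n 0) -
     (c n (qp n 0 + xs pi n 0) + pi n 0 * xs pi n 0)) = 0.
  apply/eqP; rewrite eq_le sumr_ge0 ?andbT; last by move=> n _; exact: hd.
  by rewrite sumrB subr_le0.
have := psumr_eq0P (fun n _ => hd n) hs => H.
apply/matrixP => n j; rewrite (ord1 j).
have := H n isT => /eqP; rewrite subr_eq0 => /eqP e.
have [h1 h2] := cK n; have [h3 h4] := cdiff n.
have hh := @argmin_uniq R _ _ (scvx n) h3 h4 h1 h2 _ _ _ _ _ (lohi' n) (hb n).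
rewrite xsE; apply: hh; rewrite -xsE e //.
Qed.


Lemma trBCt : (B *m C^T)^T = C *m B.
Proof. by rewrite trmx_mul trmxK tr_diag_mx. Qed.

Lemma LagE0 r w v phi pi mulo muhi :
  Lag r w v phi 0 pi mulo muhi = FRp_cost r w + dotv pi (inj r)
    - dotv (muhi + mulo) f + dotv (C *m B *m (muhi - mulo) - Lp *m pi) phi.
Proof.
rewrite /FRp_lagrangian dotv0l addr0 !dotvBr dotvNr (@dotv_mul R _ _ Lp) lapl_tr.
rewrite !(@dotv_mul R _ _ (B *m C^T)) trBCt.
rewrite !dotvBl dotvDl mulmxBr dotvBl.
lra.
Qed.

Definition stat (pi : 'cV[R]_N) (mulo muhi : 'cV[R]_L) := Lp *m pi = C *m B *m (muhi - mulo).

Lemma LagE r w v phi pi mulo muhi : stat pi mulo muhi ->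
  Lag r w v phi 0 pi mulo muhi = FRp_cost r w + dotv pi (inj r) - dotv (muhi + mulo) f.
Proof. by move=> h; rewrite LagE0 h subrr dotv0l addr0. Qed.

Lemma injE r : inj r = (qb + qp - d) + r.
Proof. by rewrite /inj addrAC. Qed.

Lemma costE pi r w : FRp_cost r w + dotv pi (inj r) =
  Phi pi r + dotv pi (qb + qp - d) + \sum_n (Dv 0 n * w n 0 ^+ 2 / 2).
Proof.
rewrite /FRp_cost /Phi injE dotvDr /dotv !big_split /=.
have -> : \sum_i Dv 0 i * w i 0 ^+ 2 / 2 = \sum_i (diag_mx Dv) i i * w i 0 ^+ 2 / 2.
  by apply: eq_bigr => i _; rewrite mxE eqxx mulr1n.
have -> : \sum_i pi i 0 * r i 0 = \sum_i pi i 0 * r i 0 by [].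
lra.
Qed.

Lemma Dsum_ge0 (w : 'cV[R]_N) : 0 <= \sum_n (Dv 0 n * w n 0 ^+ 2 / 2).
Proof.
apply: sumr_ge0 => n _; apply: divr_ge0; last by [].
by apply: mulr_ge0; [exact: ltW|exact: sqr_ge0].
Qed.

Lemma Dsum0 : \sum_n (Dv 0 n * (0 : 'cV[R]_N) n 0 ^+ 2 / 2) = 0.
Proof. by apply: big1 => n _; rewrite mxE expr0n /= mulr0 mul0r. Qed.

Lemma dotv_le0 n (u v : 'cV[R]_n) : leV 0 u -> (forall i, v i 0 <= 0) -> dotv u v <= 0.
Proof.
move=> hu hv; apply: sumr_le0 => i _; apply: mulr_ge0_le0 => //.
by have := hu i; rewrite mxE.
Qed.

Lemma dotv_cs n (u v : 'cV[R]_n) : (forall i, u i 0 * v i 0 = 0) -> dotv u v = 0.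
Proof. by move=> h; apply: big1 => i _; exact: h. Qed.

Lemma dual_ub lam pi mulo muhi r w v phi : box r ->
  (dual lam pi mulo muhi <= (Lag r w v phi lam pi mulo muhi)%:E)%E.
Proof. by move=> hb; apply: ereal_inf_lbound; exists r, w, v, phi. Qed.

Lemma dual_lb0 pi mulo muhi K :
  (forall r w v phi, box r -> K <= Lag r w v phi 0 pi mulo muhi) ->
  (K%:E <= dual 0 pi mulo muhi)%E.
Proof.
move=> h; apply: le_ereal_inf_tmp => z [r [w [v [phi [hb ->]]]]].
by rewrite lee_fin; apply: h.
Qed.


Local Notation FRp_feasible := (FRp_feasible C B D f qlo qhi qb qp d).
Local Notation FRp_optimal := (FRp_optimal C B D f qlo qhi c qb qp d).
Local Notation FR_feasible := (FR_feasible C B Ldag f qlo qhi qb qp d).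
Local Notation FR_optimal := (FR_optimal C B Ldag f qlo qhi c qb qp d).
Local Notation FR_cost := (FR_cost c qp).

Lemma LdagK' (y : 'cV[R]_N) : \sum_i y i 0 = 0 -> Lp *m (Ldag *m y) = y.
Proof. exact: (@LdagK R N L src dst Bv Bpos conn Ldag pinv y). Qed.
Lemma LdagL' (x : 'cV[R]_N) : Lp *m (Ldag *m (Lp *m x)) = Lp *m x.
Proof. exact: (@LdagL R N L src dst Bv Ldag pinv x). Qed.
Lemma ker2' (x x' : 'cV[R]_N) : Lp *m x = Lp *m x' -> B *m C^T *m x = B *m C^T *m x'.
Proof. exact: (@ker_lapl2 R N L src dst Bv Bpos x x'). Qed.
Lemma laplE' (x : 'cV[R]_N) : Lp *m x = C *m (B *m (C^T *m x)).
Proof. exact: laplE. Qed.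
Lemma sumC' (y : 'cV[R]_L) : \sum_i (C *m y) i 0 = 0.
Proof. exact: sumC. Qed.

Lemma costS r w : FRp_cost r w = FR_cost r + \sum_n (Dv 0 n * w n 0 ^+ 2 / 2).
Proof.
rewrite /Defs.FRp_cost /Defs.FR_cost big_split /=; congr (_ + _).
by apply: eq_bigr => i _; rewrite mxE eqxx mulr1n.
Qed.

Lemma feas_w0 r w v phi : FRp_feasible r w v phi ->
  FRp_feasible r 0 (B *m C^T *m phi) phi.
Proof.
move=> [hb hc hd he]; split => //.
by rewrite mulmx0 subr0 hc /lapl !mulmxA.
Qed.

Lemma w0 r w v phi : FRp_optimal r w v phi -> w = 0.
Proof.
move=> [hf ho]; have := ho _ _ _ _ (feas_w0 _ _ _ _ hf).
rewrite !costS Dsum0 addr0 gerDl => hle.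
have hs : \sum_n (Dv 0 n * w n 0 ^+ 2 / 2) = 0.
  by apply/eqP; rewrite eq_le hle Dsum_ge0.
have hnn : forall n, true -> 0 <= Dv 0 n * w n 0 ^+ 2 / 2.
  move=> n _; apply: divr_ge0 => //; apply: mulr_ge0; [exact: ltW|exact: sqr_ge0].
have H := psumr_eq0P hnn hs.
apply/matrixP => n j; rewrite (ord1 j) mxE.
have := H n isT => /eqP; rewrite mulf_eq0 invr_eq0 pnatr_eq0 orbF mulf_eq0.
by rewrite (gt_eqF (Dpos n)) sqrf_eq0 /= => /eqP.
Qed.

Lemma FR_to_FRp r : FR_feasible r ->
  FRp_feasible r 0 (B *m C^T *m (Ldag *m inj r)) (Ldag *m inj r).
Proof.
move=> [h1 h2 h3 h4 h5].
have hc : inj r = Lp *m (Ldag *m inj r) by rewrite (LdagK' _ h3).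
split => //.
- by rewrite mulmx0 subr0 {1}hc /lapl !mulmxA.
- by rewrite mulmxA; split.
Qed.

Lemma FRp_to_FR r w v phi : FRp_feasible r w v phi ->
  FR_feasible r /\ Hmx C B Ldag *m inj r = B *m C^T *m phi.
Proof.
move=> [hb hc [hd1 hd2] [he1 he2]].
have hH : Hmx C B Ldag *m inj r = B *m C^T *m phi.
  rewrite /Hmx hc -(mulmxA (B *m C^T)).
  apply: ker2'; exact: LdagL'.
split => //; split => //; rewrite ?hH //.
by rewrite hc laplE' sumC'.
Qed.

Lemma midE n (u v : 'cV[R]_n) i : (2^-1 *: (u + v)) i 0 = 2^-1 * (u i 0 + v i 0).
Proof. by rewrite !mxE. Qed.

Lemma inj_mid r1 r2 : inj (2^-1 *: (r1 + r2)) = 2^-1 *: (inj r1 + inj r2).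
Proof. apply/matrixP => i j; rewrite (ord1 j) /Defs.inj !mxE; lra. Qed.

Lemma FR_mid r1 r2 : FR_feasible r1 -> FR_feasible r2 -> FR_feasible (2^-1 *: (r1 + r2)).
Proof.
move=> [a1 b1 c1 d1 e1] [a2 b2 c2 d2 e2].
rewrite /Defs.FR_feasible inj_mid -scalemxAr mulmxDr.
split.
- move=> i; move: (a1 i) (a2 i); rewrite !mxE; lra.
- move=> i; move: (b1 i) (b2 i); rewrite !mxE; lra.
- under eq_bigr do rewrite midE; rewrite -mulr_sumr big_split /= c1 c2; lra.
- move=> i; move: (d1 i) (d2 i); rewrite midE !mxE; lra.
- move=> i; move: (e1 i) (e2 i); rewrite midE; lra.
Qed.

Lemma sum_lt (I : finType) (a b : I -> R) j : (forall i, a i <= b i) -> a j < b j ->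
  \sum_i a i < \sum_i b i.
Proof.
move=> h hj; rewrite (bigD1 j) //= [X in _ < X](bigD1 j) //=.
by apply: ltr_leD => //; apply: ler_sum => i _.
Qed.

Lemma FR_cost_mid r1 r2 : r1 != r2 ->
  FR_cost (2^-1 *: (r1 + r2)) < 2^-1 * (FR_cost r1 + FR_cost r2).
Proof.
move=> hne.
have [j hj] : exists j, r1 j 0 != r2 j 0.
  apply/existsP; apply: contraR hne; rewrite negb_exists => /forallP H.
  apply/eqP/matrixP => i k; rewrite (ord1 k); have := H i; by rewrite negbK => /eqP.
have ht : 0 < (2:R)^-1 < 1.
  by apply/andP; split; [rewrite invr_gt0 ltr0n | rewrite invf_lt1 ?ltr0n ?ltr1n].
have e4 : (1:R) - 2^-1 = 2^-1 by field.
rewrite /Defs.FR_cost -big_split /= mulr_sumr.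
apply: (@sum_lt _ _ _ j) => [i|].
- rewrite midE.
  have [e|ne] := eqVneq (r1 i 0) (r2 i 0).
  + rewrite e; have -> : 2^-1 * (r2 i 0 + r2 i 0) = r2 i 0 by lra.
    lra.
  + have hne' : qp i 0 + r1 i 0 != qp i 0 + r2 i 0 by rewrite (can_eq (addKr (qp _ 0))).
    have := scvx i (qp i 0 + r1 i 0) (qp i 0 + r2 i 0) (2^-1) hne' ht.
    rewrite e4; have -> : 2^-1 * (qp i 0 + r1 i 0) + 2^-1 * (qp i 0 + r2 i 0) = qp i 0 + 2^-1 * (r1 i 0 + r2 i 0) by field.
    move/ltW; lra.
- rewrite midE.
  have hne' : qp j 0 + r1 j 0 != qp j 0 + r2 j 0 by rewrite (can_eq (addKr (qp _ 0))).
  have := scvx j (qp j 0 + r1 j 0) (qp j 0 + r2 j 0) (2^-1) hne' ht.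
  rewrite e4; have -> : 2^-1 * (qp j 0 + r1 j 0) + 2^-1 * (qp j 0 + r2 j 0) = qp j 0 + 2^-1 * (r1 j 0 + r2 j 0) by field.
  lra.
Qed.

Lemma aux_ii (a b m : R) : a <= b -> b + 0 <= a + 0 -> a <= m -> m < 2^-1 * (a + b) -> False.
Proof. lra. Qed.

Lemma part_ii r r' w' v' phi' : FR_optimal r -> FRp_optimal r' w' v' phi' -> r = r'.
Proof.
move=> [hFR hFRo] Ho; have w0' := w0 _ _ _ _ Ho; move: Ho => [hf ho].
have [hFR' _] := FRp_to_FR _ _ _ _ hf.
have c1 := hFRo r' hFR'.
have c2 := ho _ _ _ _ (FR_to_FRp _ hFR).
rewrite !costS w0' Dsum0 in c2.
have [//|hne] := eqVneq r r'.
have h1 := hFRo _ (FR_mid _ _ hFR hFR').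
have h2 := FR_cost_mid _ _ hne.
exfalso; exact: (aux_ii _ _ _ c1 c2 h1 h2).
Qed.

Lemma part_iii r' w' v' phi' : FRp_optimal r' w' v' phi' ->
  Hmx C B Ldag *m inj r' = B *m C^T *m phi'.
Proof. by move=> [hf _]; have [_ ->] := FRp_to_FR _ _ _ _ hf. Qed.

Lemma part_y r' w' v' phi' : FRp_optimal r' w' v' phi' ->
  C *m (v' - B *m C^T *m phi') = 0.
Proof.
move=> Ho; have w0' := w0 _ _ _ _ Ho; move: Ho => [[hb hc _ _] _].
rewrite mulmxBr -hb w0' mulmx0 subr0 hc /lapl !mulmxA subrr //.
Qed.

Definition kk := qb + qp - d.
Definition Gval pi (mulo muhi : 'cV[R]_L) :=
  Phi pi (xs pi) + dotv pi kk - dotv (muhi + mulo) f.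

Lemma Lag_lb pi mulo muhi r w v phi : stat pi mulo muhi -> box r ->
  Gval pi mulo muhi <= Lag r w v phi 0 pi mulo muhi.
Proof.
move=> hs hb; rewrite LagE // costE /Gval lerD2r -/kk.
have := Phi_min pi r hb; have := Dsum_ge0 w; lra.
Qed.

Lemma dual_eq pi mulo muhi : stat pi mulo muhi ->
  dual 0 pi mulo muhi = (Gval pi mulo muhi)%:E.
Proof.
move=> hs; apply/eqP; rewrite eq_le; apply/andP; split.
- apply: le_trans (dual_ub 0 pi mulo muhi (xs pi) 0 0 0 (box_xs pi)) _.
  by rewrite lee_fin LagE // costE Dsum0 addr0 /Gval.
- apply: dual_lb0 => r w v phi hb; exact: Lag_lb.
Qed.

Definition cs (mulo muhi : 'cV[R]_L) (phi : 'cV[R]_N) :=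
  (forall l, muhi l 0 * (B *m C^T *m phi - f) l 0 = 0) /\
  (forall l, mulo l 0 * (- f - B *m C^T *m phi) l 0 = 0).

Lemma Lag_cs r w v phi pi mulo muhi : inj r = Lp *m phi -> cs mulo muhi phi ->
  Lag r w v phi 0 pi mulo muhi = FRp_cost r w.
Proof.
move=> hc [h1 h2]; rewrite /FRp_lagrangian dotv0l hc subrr dotv0r.
by rewrite !dotv_cs // !addr0.
Qed.

Lemma Lag_feas lam pi mulo muhi r w v phi : FRp_feasible r w v phi ->
  leV 0 mulo -> leV 0 muhi -> Lag r w v phi lam pi mulo muhi <= FRp_cost r w.
Proof.
move=> [hb hc [hd1 hd2] _] hlo hhi.
rewrite /FRp_lagrangian hb hc !subrr !dotv0r !addr0.
set y := B *m C^T *m phi.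
have e1 : dotv muhi (y - f) <= 0.
  apply: dotv_le0 => // i; move: (hd2 i); rewrite !mxE; lra.
have e2 : dotv mulo (- f - y) <= 0.
  apply: dotv_le0 => // i; move: (hd1 i); rewrite !mxE; lra.
move: e1 e2; set a := dotv _ _; set b := dotv _ _; set e := FRp_cost r w; lra.
Qed.

Definition dual_opt0 pi mulo muhi := forall lam2 pi2 mulo2 muhi2,
  FRp_dual_feasible lam2 pi2 mulo2 muhi2 ->
  (dual lam2 pi2 mulo2 muhi2 <= dual 0 pi mulo muhi)%E.

Lemma stat0 : stat 0 0 0.
Proof. by rewrite /stat mulmx0 subrr mulmx0. Qed.

Lemma dotv_sq n (z : 'cV[R]_n) : 0 <= dotv z z.
Proof. by apply: sumr_ge0 => i _; rewrite -expr2 sqr_ge0. Qed.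

Lemma msq_ge0 (x : R) : 0 <= x * x. Proof. by rewrite -expr2 sqr_ge0. Qed.

Lemma dotv_sq0 n (z : 'cV[R]_n) : dotv z z = 0 -> z = 0.
Proof.
move=> h; have H := psumr_eq0P (fun i _ => msq_ge0 (z i 0)) h.
apply/matrixP => i j; rewrite (ord1 j) mxE.
by have /eqP := H i isT; rewrite mulf_eq0 orbb => /eqP.
Qed.

Lemma aux_fin (K A dzz : R) : 0 < dzz -> K <= A - (A - K + 1) / dzz * dzz -> False.
Proof. by move=> h; rewrite divfK ?gt_eqF //; lra. Qed.

Lemma dual_fin pi mulo muhi : dual_opt0 pi mulo muhi -> stat pi mulo muhi.
Proof.
move=> Hdo.
set z := C *m B *m (muhi - mulo) - Lp *m pi.
have hK : ((Gval 0 0 0)%:E <= dual 0 pi mulo muhi)%E.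
  rewrite -(dual_eq _ _ _ stat0); apply: Hdo; split => i; by rewrite mxE.
set A := FRp_cost (xs pi) 0 + dotv pi (inj (xs pi)) - dotv (muhi + mulo) f.
have hU : forall s, (dual 0 pi mulo muhi <= (A - s * dotv z z)%:E)%E.
  move=> s; apply: le_trans (dual_ub 0 pi mulo muhi (xs pi) 0 0 (- s *: z) (box_xs pi)) _.
  by rewrite LagE0 -/z dotvZr -/A lee_fin mulNr.
have hzz : dotv z z = 0.
  apply/eqP; rewrite eq_le dotv_sq andbT; rewrite leNgt; apply/negP => hpos.
  have := le_trans hK (hU ((A - Gval 0 0 0 + 1) / dotv z z)).
  rewrite lee_fin => h; exact: (aux_fin _ _ _ hpos h).
have := dotv_sq0 _ _ hzz; rewrite /z => /eqP; rewrite subr_eq0 => /eqP.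
by rewrite /stat => <-.
Qed.

Lemma fin_small (P : 'I_N -> R -> Prop) :
  (forall n, exists2 h, 0 < h & forall t, 0 < t < h -> P n t) ->
  exists t, 0 < t < 1 /\ forall n, P n t.
Proof.
move=> H.
have [hf Hf] : {hf : 'I_N -> R & forall n, 0 < hf n /\ (forall t, 0 < t < hf n -> P n t)}.
  apply: (@boolp.choice _ _ (fun n h => 0 < h /\ (forall t, 0 < t < h -> P n t))) => n.
  have [h h0 Hh] := H n; by exists h.
set S := 2 + \sum_n (hf n)^-1.
have Ss : 0 <= \sum_n (hf n)^-1.
  by apply: sumr_ge0 => n _; rewrite invr_ge0 ltW // (Hf n).1.
have S1 : 1 < S by rewrite /S; lra.
have S0 : 0 < S by lra.
have Sge : forall n, (hf n)^-1 < S.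
  move=> n; rewrite /S (bigD1 n) //=.
  have : 0 <= \sum_(i | i != n) (hf i)^-1.
    by apply: sumr_ge0 => i _; rewrite invr_ge0 ltW // (Hf i).1.
  lra.
exists S^-1; split.
  by apply/andP; split; [rewrite invr_gt0|rewrite invf_lt1].
move=> n; apply: (Hf n).2; apply/andP; split; first by rewrite invr_gt0.
have h0 := (Hf n).1.
rewrite -[X in _ < X](invrK (hf n)) ltf_pV2 ?Sge // posrE ?invr_gt0 //.
Qed.

Lemma PhiD pi dl t r : Phi (pi + t *: dl) r = Phi pi r + t * dotv dl r.
Proof.
rewrite /Phi /dotv mulr_sumr -big_split /=; apply: eq_bigr => i _; rewrite !mxE; ring.
Qed.

Lemma dotv_close n (dl u v : 'cV[R]_n) eps : (forall i, `|u i 0 - v i 0| < eps) ->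
  dotv dl v - (\sum_i `|dl i 0|) * eps <= dotv dl u.
Proof.
move=> h; rewrite /dotv mulr_suml -sumrB; apply: ler_sum => i _.
have : - (`|dl i 0| * eps) <= dl i 0 * (u i 0 - v i 0).
  apply: le_trans (_ : - `|dl i 0 * (u i 0 - v i 0)| <= _); last first.
    by rewrite lerNl -normrN; apply: ler_norm.
  rewrite lerN2 normrM; apply: ler_wpM2l => //; exact: ltW.
rewrite mulrBr; lra.
Qed.

Lemma aux_dir (Gt G0 P0 Pt t a at0 b m S1 eps K0 M0 : R) :
  Gt = Pt + t * at0 + (K0 + t * b) - (M0 + t * m) ->
  G0 = P0 + K0 - M0 -> P0 <= Pt -> a - S1 * eps <= at0 -> 0 < (a + b) - m ->
  0 <= S1 -> 0 < eps -> S1 * eps < (a + b - m) -> 0 < t -> Gt <= G0 -> False.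
Proof.
move=> -> -> h1 h2 h3 hS he h4 ht.
have k1 : 0 <= t * (at0 - (a - S1 * eps)) by apply: mulr_ge0; lra.
have k2 : 0 < t * ((a + b - m) - S1 * eps) by apply: mulr_gt0; lra.
move: k1 k2; rewrite !mulrBr !mulrDr; lra.
Qed.

Lemma dir pi mulo muhi : dual_opt0 pi mulo muhi -> leV 0 mulo -> leV 0 muhi ->
  stat pi mulo muhi ->
  forall (dl : 'cV[R]_N) (dlo dhi : 'cV[R]_L),
  Lp *m dl = C *m B *m (dhi - dlo) -> leV 0 (mulo + dlo) -> leV 0 (muhi + dhi) ->
  dotv dl (inj (xs pi)) - dotv (dhi + dlo) f <= 0.
Proof.
move=> Hdo hlo hhi hs dl dlo dhi hdl hlo2 hhi2.
rewrite leNgt; apply/negP => hD.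
set S1 := \sum_n `|dl n 0|.
have S10 : 0 <= S1 by apply: sumr_ge0 => n _.
set Dd := dotv dl (inj (xs pi)) - dotv (dhi + dlo) f in hD.
set eps := Dd / (2 * (S1 + 1)).
have eps0 : 0 < eps by apply: divr_gt0 => //; apply: mulr_gt0 => //; lra.
have hSe : S1 * eps < Dd.
  rewrite /eps mulrA ltr_pdivrMr; last by apply: mulr_gt0 => //; lra.
  nra.
have hnear : forall n, exists2 h, 0 < h & forall t, 0 < t < h ->
    `|xs (pi + t *: dl) n 0 - xs pi n 0| < eps.
  move=> n; have [h1 h2] := cK n; have [h3 h4] := cdiff n.
  have [h h0 Hh] := @xh_near R (c n) (cinv n) h4 h1 h2 (qlo n 0 - qp n 0)
      (qhi n 0 - qp n 0) (qp n 0) (pi n 0) (dl n 0) eps (lohi' n) eps0.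
  exists h => // t ht; rewrite !xsE mxE [in X in xh _ _ _ _ _ X]mxE.
  exact: Hh.
have [t [/andP[t0 t1] Ht]] := fin_small _ hnear.
set pit := pi + t *: dl; set mlt := mulo + t *: dlo; set mht := muhi + t *: dhi.
have hst : stat pit mlt mht.
  rewrite /stat /pit mulmxDr -(scalemxAr t Lp dl) hs hdl (scalemxAr t) -mulmxDr; congr (_ *m _).
  apply/matrixP => i j; rewrite !mxE; ring.
have hfe : FRp_dual_feasible 0 pit mlt mht.
  split => i.
  - move: (hlo i) (hlo2 i); rewrite !mxE => a b; nra.
  - move: (hhi i) (hhi2 i); rewrite !mxE => a b; nra.
have := Hdo _ _ _ _ hfe; rewrite !dual_eq // lee_fin.
apply: (@aux_dir _ _ (Phi pi (xs pi)) (Phi pi (xs pit)) t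
   (dotv dl (xs pi)) (dotv dl (xs pit)) (dotv dl kk) (dotv (dhi + dlo) f) S1 eps
   (dotv pi kk) (dotv (muhi + mulo) f)).
- rewrite /Gval PhiD /pit dotvDl dotvZl /mht /mlt.
  have -> : muhi + t *: dhi + (mulo + t *: dlo) = (muhi + mulo) + t *: (dhi + dlo).
    apply/matrixP => i j; rewrite !mxE; ring.
  by rewrite dotvDl dotvZl.
- by [].
- apply: Phi_min; exact: box_xs.
- exact: dotv_close.
- move: hD; rewrite /Dd injE -/kk dotvDr; set a1 := dotv dl kk; set a2 := dotv dl (xs pi).
  by rewrite (addrC a1 a2).
- by [].
- by [].
- move: hSe; rewrite /Dd injE -/kk dotvDr; set a1 := dotv dl kk; set a2 := dotv dl (xs pi).
  by rewrite (addrC a1 a2).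
- by [].
Qed.

Lemma dotv_delta n (l : 'I_n) (v : 'cV[R]_n) : dotv (delta_mx l 0) v = v l 0.
Proof.
rewrite /dotv (bigD1 l) //= mxE !eqxx mul1r big1 ?addr0 // => i /negbTE hi.
by rewrite mxE hi mul0r.
Qed.

Lemma dotv_le0_eq n (u v : 'cV[R]_n) : leV 0 u -> (forall i, v i 0 <= 0) ->
  dotv u v = 0 -> forall i, u i 0 * v i 0 = 0.
Proof.
move=> hu hv h i.
have hnn : forall i, true -> 0 <= - (u i 0 * v i 0).
  move=> k _; rewrite oppr_ge0; apply: mulr_ge0_le0 => //.
  by have := hu k; rewrite mxE.
have hs : \sum_i - (u i 0 * v i 0) = 0 by rewrite sumrN -/(dotv u v) h oppr0.
have H := psumr_eq0P hnn hs.
by have /eqP := H i isT; rewrite oppr_eq0 => /eqP.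
Qed.

Lemma Lp_one : Lp *m (const_mx 1 : 'cV[R]_N) = 0.
Proof.
rewrite laplE'.
have -> : C^T *m (const_mx 1 : 'cV[R]_N) = 0.
  by apply/matrixP => l j; rewrite (ord1 j) CtE !mxE subrr.
by rewrite !mulmx0.
Qed.

Lemma dotv_one (v : 'cV[R]_N) : dotv (const_mx 1) v = \sum_i v i 0.
Proof. by apply: eq_bigr => i _; rewrite mxE mul1r. Qed.

Lemma dotv_mulT m n (A : 'M[R]_(m, n)) u v : dotv (A *m u) v = dotv u (A^T *m v).
Proof. by rewrite dotvC dotv_mul dotvC. Qed.

Lemma aux_cs1 (m a : R) : 0 <= m -> a <= 0 -> - m * a <= 0 -> m * a = 0.
Proof. by move=> h1 h2 h3; apply/eqP; rewrite eq_le; apply/andP; split; nra. Qed.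

Lemma delta_ok (u : 'cV[R]_L) : leV 0 u -> forall l,
  leV 0 (u + delta_mx l 0) /\ leV 0 (u + (- u l 0) *: delta_mx l 0).
Proof.
move=> hu l; split => i; have := hu i; rewrite !mxE => h.
- by apply: addr_ge0 => //; rewrite ler0n.
- have [->|ne] := eqVneq i l; first by rewrite !eqxx mulr1 subrr.
  by rewrite mulr0 addr0.
Qed.

Lemma aux_back (cx cr Px Pr K Mf px pr s1 s2 L2 : R) :
  cx + px - Mf = cx -> cx + px = Px + K -> cr + pr = Pr + K ->
  cr + pr - Mf = L2 -> L2 = cr + (s1 + s2) -> cr <= cx -> Px <= Pr ->
  s1 <= 0 -> s2 <= 0 -> Pr <= Px /\ (s1 = 0 /\ s2 = 0).
Proof. move=> *; split; [lra|split; lra]. Qed.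

Lemma back pi mulo muhi r' w' v' phi' :
  FRp_optimal r' w' v' phi' -> FRp_dual_optimal C B D f qlo qhi c qb qp d w' pi mulo muhi ->
  [/\ r' = xs pi, stat pi mulo muhi, cs mulo muhi phi', leV 0 mulo & leV 0 muhi].
Proof.
move=> Ho [[hlo hhi] Hdo0].
have w0' := w0 _ _ _ _ Ho; subst w'.
have Hdo : dual_opt0 pi mulo muhi by [].
have hs := dual_fin _ _ _ Hdo.
have Hdir := dir _ _ _ Hdo hlo hhi hs.
have hz : forall v, leV 0 (v + (0 : 'cV[R]_L)) <-> leV 0 v by move=> v; rewrite addr0.
have hsum : \sum_i inj (xs pi) i 0 = 0.
  have h1 := Hdir (const_mx 1) 0 0.
  have h2 := Hdir (- const_mx 1) 0 0.
  rewrite Lp_one subrr mulmx0 !addr0 in h1; rewrite mulmxN Lp_one oppr0 subrr mulmx0 !addr0 in h2.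
  have {h1} := h1 erefl hlo hhi; have {h2} := h2 erefl hlo hhi.
  rewrite dotvNl !dotv_one dotv0l !subr0 => h2 h1.
  apply/eqP; rewrite eq_le h1 /=; by rewrite -oppr_le0.
set phih := Ldag *m inj (xs pi).
have hL : Lp *m phih = inj (xs pi) by apply: LdagK'.
set y := B *m C^T *m phih.
have key : forall dlo dhi, leV 0 (mulo + dlo) -> leV 0 (muhi + dhi) ->
    dotv dhi (y - f) + dotv dlo (- f - y) <= 0.
  move=> dlo dhi h1 h2.
  set dl := Ldag *m (C *m (B *m (dhi - dlo))).
  have hdl : Lp *m dl = C *m B *m (dhi - dlo).
    by rewrite LdagK'; [rewrite mulmxA | exact: sumC'].
  have := Hdir dl dlo dhi hdl h1 h2.
  rewrite -hL (@dotv_mul R _ _ Lp) lapl_tr hdl dotv_mulT.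
  rewrite trmx_mul tr_diag_mx -/y.
  have -> : dotv dhi (y - f) + dotv dlo (- f - y) = dotv (dhi - dlo) y - dotv (dhi + dlo) f.
    rewrite dotvBl dotvDl !dotvBr dotvNr; ring.
  by [].
have [hyf hcsh] : (forall l, (y - f) l 0 <= 0) /\ (forall l, muhi l 0 * (y - f) l 0 = 0).
  suff H : forall l, (y - f) l 0 <= 0 /\ muhi l 0 * (y - f) l 0 = 0.
    by split => l; have [] := H l.
  move=> l; have [d1 d2] := delta_ok _ hhi l.
  have k1 := key 0 _ (iffRL (hz _) hlo) d1.
  have k2 := key 0 _ (iffRL (hz _) hlo) d2.
  rewrite dotv0l addr0 dotv_delta in k1.
  rewrite dotv0l addr0 dotvZl dotv_delta in k2.
  split => //; apply: aux_cs1 => //; by have := hhi l; rewrite mxE.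
have [hfy hcsl] : (forall l, (- f - y) l 0 <= 0) /\ (forall l, mulo l 0 * (- f - y) l 0 = 0).
  suff H : forall l, (- f - y) l 0 <= 0 /\ mulo l 0 * (- f - y) l 0 = 0.
    by split => l; have [] := H l.
  move=> l; have [d1 d2] := delta_ok _ hlo l.
  have k1 := key _ 0 d1 (iffRL (hz _) hhi).
  have k2 := key _ 0 d2 (iffRL (hz _) hhi).
  rewrite dotv0l add0r dotv_delta in k1.
  rewrite dotv0l add0r dotvZl dotv_delta in k2.
  split => //; apply: aux_cs1 => //; by have := hlo l; rewrite mxE.
have csh : cs mulo muhi phih by split.
have hfx : FRp_feasible (xs pi) 0 y phih.
  split.
  - by rewrite mulmx0 subr0 -hL laplE' /y !mulmxA.
  - by rewrite hL.
  - split => l.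
    + by move: (hfy l); rewrite !mxE; lra.
    + by move: (hyf l); rewrite !mxE; lra.
  - exact: box_xs.
move: Ho => [[hb hc [hd1 hd2] hbox] ho].
have opt := ho _ _ _ _ hfx.
have E1 := LagE (xs pi) 0 y phih pi mulo muhi hs; rewrite Lag_cs // in E1.
have C1 := costE pi (xs pi) 0; rewrite Dsum0 addr0 in C1.
have C2 := costE pi r' 0; rewrite Dsum0 addr0 in C2.
have E2 := LagE r' 0 v' phi' pi mulo muhi hs.
set y' := B *m C^T *m phi'.
have E3 : Lag r' 0 v' phi' 0 pi mulo muhi =
    FRp_cost r' 0 + (dotv muhi (y' - f) + dotv mulo (- f - y')).
  rewrite /FRp_lagrangian dotv0l hc subrr dotv0r; ring.
have hv1 : forall i, (y' - f) i 0 <= 0 by move=> i; move: (hd2 i); rewrite !mxE; lra.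
have hv2 : forall i, (- f - y') i 0 <= 0 by move=> i; move: (hd1 i); rewrite !mxE; lra.
have s1 : dotv muhi (y' - f) <= 0 by apply: dotv_le0.
have s2 : dotv mulo (- f - y') <= 0 by apply: dotv_le0.
have pm := Phi_min pi r' hbox.
have [hP [z1 z2]] := aux_back _ _ _ _ _ _ _ _ _ _ _ (esym E1) C1 C2 (esym E2) E3 opt pm s1 s2.
split => //.
- exact: Phi_uniq.
- split; [exact: (dotv_le0_eq _ _ _ hhi hv1 z1) | exact: (dotv_le0_eq _ _ _ hlo hv2 z2)].
Qed.

Lemma diag0 n (z : 'rV[R]_n) (y : 'cV[R]_n) : (forall i, 0 < z 0 i) ->
  diag_mx z *m y = 0 -> y = 0.
Proof.
move=> hz h; apply/matrixP => i j; rewrite (ord1 j).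
have := congr1 (fun M : 'cV[R]_n => M i 0) h; rewrite mul_diag_mx !mxE => /eqP.
by rewrite mulf_eq0 (gt_eqF (hz i)) /= => /eqP.
Qed.

Lemma projp_cs (x y : R) : projp x y = 0 -> x * y = 0.
Proof.
rewrite /projp; case: ifP => [/andP[/eqP -> _] _|_ ->]; by rewrite ?mul0r ?mulr0.
Qed.

Lemma cs_projp (x y : R) : x * y = 0 -> y <= 0 -> projp x y = 0.
Proof.
move=> h hy; rewrite /projp; case: ifP => // hc.
have [y0|yn] := eqVneq y 0; first by [].
move: h => /eqP; rewrite mulf_eq0 (negbTE yn) orbF => x0.
by move: hc; rewrite x0 /= lt_neqAle yn hy.
Qed.

Variables (zpi chiphi : 'rV[R]_N) (zmuhi zmulo : 'rV[R]_L).
Hypotheses (zpip : forall n, 0 < zpi 0 n) (chip : forall n, 0 < chiphi 0 n)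
  (zmuhip : forall l, 0 < zmuhi 0 l) (zmulop : forall l, 0 < zmulo 0 l).

Lemma equiv r' w' v' phi' : FRp_optimal r' w' v' phi' ->
  forall (pi : 'cV[R]_N) (mulo' muhi' : 'cV[R]_L),
    cl_equilibrium C B D (diag_mx Mv) f qlo qhi cinv qb qp d
      (diag_mx zpi) (diag_mx chiphi) (diag_mx zmuhi) (diag_mx zmulo)
      r' w' phi' phi' pi mulo' muhi'
    <-> FRp_primal_dual_optimal C B D f qlo qhi c qb qp d r' w' v' phi' pi mulo' muhi'.
Proof.
move=> Ho pi mulo muhi.
have w0' := w0 _ _ _ _ Ho.
have [[hb hc [hd1 hd2] hbox] ho] := Ho.
set y' := B *m C^T *m phi'.
have hv1 : forall i, (y' - f) i 0 <= 0 by move=> i; move: (hd2 i); rewrite !mxE; lra.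
have hv2 : forall i, (- f - y') i 0 <= 0 by move=> i; move: (hd1 i); rewrite !mxE; lra.
split.
- move=> [hr [[hlo hhi] [_ [_ [_ [hpmuhi [hpmulo hphi]]]]]]].
  have hs : stat pi mulo muhi.
    have := diag0 _ _ _ chip hphi => /eqP; rewrite subr_eq0 => /eqP; exact.
  have hcs : cs mulo muhi phi'.
    split => l.
    + have := diag0 _ _ _ zmuhip hpmuhi => /(congr1 (fun M : 'cV[R]_L => M l 0)).
      rewrite !mxE; exact: projp_cs.
    + have := diag0 _ _ _ zmulop hpmulo => /(congr1 (fun M : 'cV[R]_L => M l 0)).
      rewrite !mxE; exact: projp_cs.
  subst w'.
  have hx : xs pi = r' by rewrite hr.
  split => //; split; first by split.
  move=> lam2 pi2 mulo2 muhi2 [h2lo h2hi].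
  rewrite dual_eq //.
  have hG : Gval pi mulo muhi = FRp_cost r' 0.
    have E1 := LagE r' 0 v' phi' pi mulo muhi hs.
    rewrite Lag_cs // in E1.
    have C1 := costE pi r' 0; rewrite Dsum0 addr0 in C1.
    rewrite /Gval hx /kk -C1; move: E1; set a := FRp_cost r' 0; set b := dotv _ _; set e := dotv _ f.
    move=> E1; rewrite {2}E1; ring.
  rewrite hG; apply: le_trans (dual_ub lam2 pi2 mulo2 muhi2 r' 0 v' phi' hbox) _.
  rewrite lee_fin; apply: Lag_feas => //; exact: feas_w0 _ _ _ _ (proj1 Ho).
- move=> [_ Hd].
  have [hr hs hcs hlo hhi] := back _ _ _ _ _ _ _ Ho Hd.
  subst w'.
  split; first by rewrite hr.
  split; first by split.
  split => //.
  split; first by rewrite mulmx0 subr0 -hc subrr mulmx0.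
  split; first by rewrite -hc subrr mulmx0.
  split.
    have -> : (\col_l projp (muhi l 0) ((B *m C^T *m phi' - f) l 0)) = 0.
      apply/matrixP => l j; rewrite (ord1 j) [LHS]mxE [RHS]mxE; apply: cs_projp.
        exact: hcs.1.
      exact: hv1.
    by rewrite mulmx0.
  split.
    have -> : (\col_l projp (mulo l 0) ((- f - B *m C^T *m phi') l 0)) = 0.
      apply/matrixP => l j; rewrite (ord1 j) [LHS]mxE [RHS]mxE; apply: cs_projp.
        exact: hcs.2.
      exact: hv2.
    by rewrite mulmx0.
  by rewrite hs subrr mulmx0.
Qed.
End Main.

Theorem proposition1 (R : realType) (N L : nat)
  (src dst : 'I_L -> 'I_N) (Bv : 'rV[R]_L) (Dv Mv : 'rV[R]_N)
  (Ldag : 'M[R]_N) (f : 'cV[R]_L) (qlo qhi : 'cV[R]_N)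
  (c cinv : 'I_N -> R -> R)
  (zpi chiphi : 'rV[R]_N) (zmuhi zmulo : 'rV[R]_L)
  (qb qp d : 'cV[R]_N)
  (r r' w' : 'cV[R]_N) (v' : 'cV[R]_L) (phi' : 'cV[R]_N) :
  let C := incidence R src dst in
  let B := diag_mx Bv in
  let D := diag_mx Dv in
  let M := diag_mx Mv in
  graph_connected src dst ->
  (forall l, 0 < Bv 0 l) -> (forall n, 0 < Dv 0 n) -> (forall n, 0 < Mv 0 n) ->
  is_MP_pinv (lapl C B) Ldag ->
  (forall n, strictly_convex (c n)) ->
  (forall n, cont_diff (c n)) ->
  (forall n, cancel (derive1 (c n)) (cinv n) /\ cancel (cinv n) (derive1 (c n))) ->
  (forall n, 0 < zpi 0 n) -> (forall n, 0 < chiphi 0 n) ->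
  (forall l, 0 < zmuhi 0 l) -> (forall l, 0 < zmulo 0 l) ->
  FR_optimal C B Ldag f qlo qhi c qb qp d r ->
  FRp_optimal C B D f qlo qhi c qb qp d r' w' v' phi' ->
  [/\ w' = 0,
      r = r',
      Hmx C B Ldag *m (qb + qp + r - d) = B *m C^T *m phi'
    & exists (theta' : 'cV[R]_N) (y' : 'cV[R]_L),
        [/\ C *m y' = 0,
            v' = B *m C^T *m theta' + y',
            B *m C^T *m phi' = B *m C^T *m theta'
          & forall (pi' : 'cV[R]_N) (mulo' muhi' : 'cV[R]_L),
              cl_equilibrium C B D M f qlo qhi cinv qb qp d
                (diag_mx zpi) (diag_mx chiphi) (diag_mx zmuhi) (diag_mx zmulo)
                r' w' theta' phi' pi' mulo' muhi'
              <->
              FRp_primal_dual_optimal C B D f qlo qhi c qb qp d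
                r' w' v' phi' pi' mulo' muhi']].
Proof.
move=> C B D M conn Bpos Dpos Mpos pinv scvx cdiff cK zpip chip zmuhip zmulop HFR Ho.
have w0' := @w0 R N L src dst Bv Dv f qlo qhi c qb qp d Dpos r' w' v' phi' Ho.
have e2 := @part_ii R N L src dst Bv Dv Ldag f qlo qhi c qb qp d conn Bpos Dpos pinv scvx
  r r' w' v' phi' HFR Ho.
have lohi : forall n, qlo n 0 <= qhi n 0.
  move: Ho => [[_ _ _ [h1 h2]] _] n; move: (h1 n) (h2 n); rewrite !mxE => a b.
  exact: le_trans a b.
split => //.
- rewrite e2; exact: (@part_iii R N L src dst Bv Dv Ldag f qlo qhi c qb qp d Bpos pinv
    r' w' v' phi' Ho).
- exists phi', (v' - B *m C^T *m phi'); split.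
  + exact: (@part_y R N L src dst Bv Dv f qlo qhi c qb qp d Dpos r' w' v' phi' Ho).
  + by rewrite addrC subrK.
  + by [].
  + exact: (@equiv R N L src dst Bv Dv Mv Ldag f qlo qhi c cinv qb qp d conn Bpos Dpos pinv
      scvx cdiff cK lohi zpi chiphi zmuhi zmulo chip zmuhip zmulop r' w' v' phi' Ho).
Qed.
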